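(* Let $k\ge2$, let $G$ be a $k$-player game and $M$ a $k$-partite Bell functional. Then for every $d\ge1$, $\omega^*_d(G)\le d^{k-1}\omega(G)$ and $\omega^*_d(M)\le(2d)^{k-1}\omega(M)$.
   Context: A $k$-partite Bell functional is a real array $M=(M_{x_1,\dots,x_k}^{a_1,\dots,a_k})$ indexed by finite question and answer sets for each party; a $k$-player game is one with nonnegative coefficients. $\omega(M)=\sup|\sum M_{x_1..x_k}^{a_1..a_k}P(a_1,\dots,a_k|x_1,\dots,x_k)|$ over the convex hull of products $P_1(a_1|x_1)\cdots P_k(a_k|x_k)$ of conditional probability distributions. $\omega^*_d(M)=\sup|\sum M_{x_1..x_k}^{a_1..a_k}\langle\psi|E_{x_1}^{a_1}\otimes\cdots\otimes E_{x_k}^{a_k}|\psi\rangle|$ over all $m\le d$, unit $|\psi\rangle\in(\mathbb C^m)^{\otimes k}$ and POVMs $\{E_{x_i}^{a_i}\}_{a_i}$ in $M_m$ for each party $i$. *)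

(* Defs.v *)
(* Complex numbers: an arbitrary numClosedFieldType C
   (e.g. algC). *)
From HB Require Import structures.
From mathcomp Require Import all_boot all_order all_algebra.
Set Implicit Arguments. Unset Strict Implicit. Unset Printing Implicit Defensive.
Import Order.TTheory GRing.Theory Num.Theory.
Local Open Scope ring_scope.

Section Bell.
Variable C : numClosedFieldType.
Variable k : nat.
Variables (nX nA : 'I_k -> nat).

Definition qtuple := {dffun forall i : 'I_k, 'I_(nX i)}.
Definition atuple := {dffun forall i : 'I_k, 'I_(nA i)}.

Definition bell_functional := qtuple -> atuple -> C.

Definition local_profile := forall i : 'I_k, 'I_(nX i) -> 'I_(nA i) -> C.

Definition is_cond_prob (P : local_profile) : Prop :=
  (forall i x a, 0 <= P i x a) /\ (forall i x, \sum_(a < nA i) P i x a = 1).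

Definition classical_val (M : bell_functional) (n : nat) (lam : 'I_n -> C)
    (P : 'I_n -> local_profile) : C :=
  \sum_(x : qtuple) \sum_(a : atuple)
     M x a * \sum_(j < n) lam j * \prod_(i < k) P j i (x i) (a i).

(* c is an upper bound of the set whose supremum is omega(M) *)
Definition classical_ub (M : bell_functional) (c : C) : Prop :=
  forall (n : nat) (lam : 'I_n -> C) (P : 'I_n -> local_profile),
    (forall j, 0 <= lam j) -> \sum_(j < n) lam j = 1 ->
    (forall j, is_cond_prob (P j)) ->
    `|classical_val M lam P| <= c.

Definition psd (m : nat) (A : 'M[C]_m) : Prop :=
  (forall r s, A s r = (A r s)^*) /\
  (forall v : 'I_m -> C, 0 <= \sum_(r < m) \sum_(s < m) (v r)^* * A r s * v s).

Definition is_povm (m : nat)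
    (E : forall i : 'I_k, 'I_(nX i) -> 'I_(nA i) -> 'M[C]_m) : Prop :=
  forall i x, (forall a, psd (E i x a)) /\ \sum_(a < nA i) E i x a = 1%:M.

(* vectors of (C^m)^{(x) k}, written in the product basis indexed by
   functions 'I_k -> 'I_m *)
Definition is_unit_state (m : nat) (psi : {ffun 'I_k -> 'I_m} -> C) : Prop :=
  \sum_(u : {ffun 'I_k -> 'I_m}) `|psi u| ^+ 2 = 1.

(* <psi| E_{x_1}^{a_1} (x) ... (x) E_{x_k}^{a_k} |psi>, entrywise *)
Definition tens_expect (m : nat) (psi : {ffun 'I_k -> 'I_m} -> C)
    (F : forall i : 'I_k, 'M[C]_m) : C :=
  \sum_(u : {ffun 'I_k -> 'I_m}) \sum_(v : {ffun 'I_k -> 'I_m})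
     (psi u)^* * (\prod_(i < k) F i (u i) (v i)) * psi v.

Definition quantum_val (M : bell_functional) (m : nat)
    (psi : {ffun 'I_k -> 'I_m} -> C)
    (E : forall i : 'I_k, 'I_(nX i) -> 'I_(nA i) -> 'M[C]_m) : C :=
  \sum_(x : qtuple) \sum_(a : atuple)
     M x a * tens_expect psi (fun i => E i (x i) (a i)).

(* every value in the set whose supremum is omega*_d(M) is <= B *)
Definition quantum_bounded (M : bell_functional) (d : nat) (B : C) : Prop :=
  forall (m : nat) (psi : {ffun 'I_k -> 'I_m} -> C)
         (E : forall i : 'I_k, 'I_(nX i) -> 'I_(nA i) -> 'M[C]_m),
    (m <= d)%N -> is_unit_state psi -> is_povm E ->
    `|quantum_val M psi E| <= B.

End Bell.

(* Main.v *)
From HB Require Import structures.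
From mathcomp Require Import all_boot all_order all_algebra.
From mathcomp Require Import ring sesquilinear spectral.
Require Import Defs.
Set Implicit Arguments. Unset Strict Implicit. Unset Printing Implicit Defensive.
Import Order.TTheory GRing.Theory Num.Theory.
Local Open Scope ring_scope.

Section Bil.
Variable C : numClosedFieldType.
Variable I : finType.
Implicit Types (K : I -> I -> C) (f g : I -> C).

Definition bil K f g : C := \sum_u \sum_v (f u)^* * K u v * g v.

Lemma eq_bil K f f' g g' : f =1 f' -> g =1 g' -> bil K f g = bil K f' g'.
Proof. by move=> ef eg; apply: eq_bigr => u _; apply: eq_bigr => v _; rewrite ef eg. Qed.

Lemma bil_suml (J : finType) K (h : J -> I -> C) g :
  bil K (fun u => \sum_j h j u) g = \sum_j bil K (h j) g.
Proof.
rewrite /bil [RHS]exchange_big; apply: eq_bigr => u _ /=.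
rewrite [RHS]exchange_big; apply: eq_bigr => v _ /=.
by rewrite rmorph_sum !mulr_suml.
Qed.

Lemma bil_sumr (J : finType) K (h : J -> I -> C) f :
  bil K f (fun u => \sum_j h j u) = \sum_j bil K f (h j).
Proof.
rewrite /bil [RHS]exchange_big; apply: eq_bigr => u _ /=.
rewrite [RHS]exchange_big; apply: eq_bigr => v _ /=.
by rewrite !mulr_sumr.
Qed.

Lemma bilBB K f g : bil K (fun u => f u - g u) (fun u => f u - g u) =
  bil K f f - bil K f g - bil K g f + bil K g g.
Proof.
rewrite /bil -!sumrB -big_split /=; apply: eq_bigr => u _.
rewrite -!sumrB -big_split /=; apply: eq_bigr => v _.
rewrite rmorphB /=; ring.
Qed.

Lemma bilZl K c f g : bil K (fun u => c * f u) g = c^* * bil K f g.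
Proof.
rewrite /bil mulr_sumr; apply: eq_bigr => u _; rewrite mulr_sumr.
by apply: eq_bigr => v _; rewrite rmorphM /=; ring.
Qed.

Lemma bilZr K c f g : bil K f (fun u => c * g u) = c * bil K f g.
Proof.
rewrite /bil mulr_sumr; apply: eq_bigr => u _; rewrite mulr_sumr.
by apply: eq_bigr => v _; ring.
Qed.

Lemma bil_lin (J : finType) (c : J -> C) (Kj : J -> I -> I -> C) f g :
  \sum_j c j * bil (Kj j) f g = bil (fun u v => \sum_j c j * Kj j u v) f g.
Proof.
rewrite /bil.
under eq_bigr => j _ do rewrite mulr_sumr.
rewrite exchange_big; apply: eq_bigr => u _.
under eq_bigr => j _ do rewrite mulr_sumr.
rewrite exchange_big; apply: eq_bigr => v _.
rewrite mulr_sumr mulr_suml; apply: eq_bigr => j _; ring.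
Qed.

Definition herm K := forall u v, K v u = (K u v)^*.

Lemma bil_conj K f g : herm K -> (bil K f g)^* = bil K g f.
Proof.
move=> hK; rewrite /bil rmorph_sum exchange_big /=; apply: eq_bigr => u _.
rewrite rmorph_sum; apply: eq_bigr => v _.
by rewrite !rmorphM /= conjCK hK conjCK; ring.
Qed.

Lemma sum4 (J : finType) (a b c d : J -> J -> C) :
  \sum_j1 \sum_j2 (a j1 j2 - b j1 j2 - c j1 j2 + d j1 j2) =
  \sum_j1 \sum_j2 a j1 j2 - \sum_j1 \sum_j2 b j1 j2 - \sum_j1 \sum_j2 c j1 j2
  + \sum_j1 \sum_j2 d j1 j2.
Proof.
rewrite -!sumrB -big_split /=; apply: eq_bigr => j1 _.
by rewrite -!sumrB -big_split.
Qed.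

Lemma bil_cs (J : finType) K (h : J -> I -> C) : (forall f, 0 <= bil K f f) ->
  bil K (fun u => \sum_j h j u) (fun u => \sum_j h j u)
   <= #|J|%:R * \sum_j bil K (h j) (h j).
Proof.
move=> pK.
have H0 : 0 <= \sum_j1 \sum_j2 bil K (fun u => h j1 u - h j2 u) (fun u => h j1 u - h j2 u).
  by apply: sumr_ge0 => j1 _; apply: sumr_ge0 => j2 _; apply: pK.
have E : \sum_j1 \sum_j2 bil K (fun u => h j1 u - h j2 u) (fun u => h j1 u - h j2 u)
   = \sum_j1 \sum_j2 (bil K (h j1) (h j1) - bil K (h j1) (h j2) - bil K (h j2) (h j1)
        + bil K (h j2) (h j2)).
  by apply: eq_bigr => j1 _; apply: eq_bigr => j2 _; rewrite bilBB.
rewrite E sum4 in H0.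
set D := \sum_j bil K (h j) (h j) in H0 *.
have A1 : \sum_(j1 : J) \sum_(j2 : J) bil K (h j1) (h j1) = #|J|%:R * D.
  by rewrite /D mulr_sumr; apply: eq_bigr => j _; rewrite sumr_const mulr_natl.
have A2 : \sum_(j1 : J) \sum_(j2 : J) bil K (h j2) (h j2) = #|J|%:R * D.
  by rewrite sumr_const /D mulr_natl.
have A3 : \sum_(j1 : J) \sum_(j2 : J) bil K (h j2) (h j1) =
          \sum_(j1 : J) \sum_(j2 : J) bil K (h j1) (h j2).
  by rewrite exchange_big.
rewrite A1 A2 A3 in H0.
rewrite bil_suml; under eq_bigr => j _ do rewrite bil_sumr.
rewrite -subr_ge0.
have : 0 <= 2%:R * (#|J|%:R * D - \sum_j1 \sum_j2 bil K (h j1) (h j2)).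
  by move: H0; congr (_ <= _); ring.
by rewrite pmulr_rge0 // ltr0n.
Qed.

Lemma bil_amgm K f g : herm K -> (forall h, 0 <= bil K h h) ->
  `|bil K f g| <= (bil K f f + bil K g g) / 2%:R.
Proof.
move=> hK pK.
have ha := pK f; have hb := pK g.
set z := bil K f g.
have [z0|nz] := eqVneq z 0.
  by rewrite z0 normr0 divr_ge0 ?addr_ge0 ?ler0n.
have nz' : `|z| != 0 by rewrite normr_eq0.
set c := z^* / `|z|.
have := pK (fun u => f u - c * g u).
rewrite bilBB bilZl bilZr bilZl bilZr -/z -[bil K g f](bil_conj _ _ hK) -/z.
have cz : c * z = `|z| by rewrite /c mulrAC -normCKC expr2 mulfK.
have cc : c^* * c = 1.
  rewrite -normCKC /c normrM normfV norm_conjC normr_id divff //.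
  by rewrite expr1n.
have czc : c^* * z^* = `|z| by rewrite -rmorphM /= cz conj_normC.
have -> : c^* * (c * bil K g g) = (c^* * c) * bil K g g by rewrite mulrA.
rewrite cc mul1r cz czc => H.
rewrite ler_pdivlMr ?ltr0n // -subr_ge0.
by move: H; congr (_ <= _); ring.
Qed.

Lemma eq_bilK K K' f g : (forall u v, K u v = K' u v) -> bil K f g = bil K' f g.
Proof. by move=> e; apply: eq_bigr => u _; apply: eq_bigr => v _; rewrite e. Qed.

Lemma bil_lin2 (J1 J2 : finType) (c : J1 -> J2 -> C) (Kj : J1 -> J2 -> I -> I -> C) f g :
  \sum_j1 \sum_j2 c j1 j2 * bil (Kj j1 j2) f g =
  bil (fun u v => \sum_j1 \sum_j2 c j1 j2 * Kj j1 j2 u v) f g.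
Proof.
rewrite pair_bigA /= (bil_lin (fun p => c p.1 p.2) (fun p => Kj p.1 p.2)).
by apply: eq_bilK => u v; rewrite pair_bigA.
Qed.

Lemma sum_delta (r : I) (F : I -> C) : \sum_u (u == r)%:R * F u = F r.
Proof.
rewrite (bigD1 r) // eqxx mul1r big1 => [|u /negPf ->]; last by rewrite mul0r.
by rewrite /= addr0.
Qed.

Lemma bil_delta K r s : bil K (fun t => (t == r)%:R) (fun t => (t == s)%:R) = K r s.
Proof.
rewrite /bil.
under eq_bigr => u _ do under eq_bigr => v _ do rewrite rmorph_nat -mulrA.
under eq_bigr => u _ do rewrite -mulr_sumr.
rewrite sum_delta.
by under eq_bigr => v _ do rewrite mulrC; rewrite sum_delta.
Qed.

End Bil.

Section Psd.
Variable C : numClosedFieldType.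

Lemma sum3_rearr (I L : finType) (a : I -> C) (b : L -> I -> C) (c : L -> C)
   (d : L -> I -> C) (e : I -> C) :
  \sum_r \sum_s a r * (\sum_l b l r * c l * d l s) * e s =
  \sum_l c l * (\sum_r a r * b l r) * (\sum_s d l s * e s).
Proof.
transitivity (\sum_r \sum_s \sum_l a r * b l r * c l * d l s * e s).
  apply: eq_bigr => r _; apply: eq_bigr => s _.
  rewrite mulr_sumr big_distrl /=; apply: eq_bigr => l _; ring.
symmetry.
transitivity (\sum_l \sum_r \sum_s a r * b l r * c l * d l s * e s).
  apply: eq_bigr => l _; rewrite [c l * _]mulr_sumr mulr_suml; apply: eq_bigr => r _.
  by rewrite mulr_sumr; apply: eq_bigr => s _; ring.
rewrite exchange_big /=; apply: eq_bigr => r _.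
by rewrite exchange_big.
Qed.

Lemma psd_bil m (A : 'M[C]_m) : psd A -> forall v, 0 <= bil (fun r s => A r s) v v.
Proof. by case. Qed.

Lemma psd_herm m (A : 'M[C]_m) : psd A -> herm (fun r s => A r s).
Proof. by case=> h _ u v; rewrite h. Qed.

Lemma psd_spectral m (A : 'M[C]_m) : psd A ->
  (forall j, 0 <= spectral_diag A 0 j) /\
  forall r s, A r s = \sum_j (spectralmx A j r)^* * spectral_diag A 0 j * spectralmx A j s.
Proof.
move=> pA.
have hA : (A ^t* )%sesqui = A.
  by apply/matrixP => r s; rewrite !mxE; case: pA => h _; rewrite h conjCK.
have nA : A \is normalmx by apply/normalmxP; rewrite hA.
have E := orthomx_spectralP nA.
have U := spectral_unitarymx A.
rewrite invmx_unitary // in E.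
set P := spectralmx A in E U *; set sp := spectral_diag A in E *.
have Es : forall r s, A r s = \sum_j (P j r)^* * sp 0 j * P j s.
  move=> r s; rewrite {1}E mxE; apply: eq_bigr => j _.
  by rewrite mul_mx_diag !mxE.
split=> // j.
have := psd_bil pA (fun s => (P j s)^*).
rewrite /bil.
under eq_bigr => r _ do under eq_bigr => s _ do rewrite Es.
rewrite sum3_rearr.
have Ur : forall l, \sum_r (P j r)^*^* * (P l r)^* = (j == l)%:R.
  move=> l; move/unitarymxP: U => /matrixP/(_ j l); rewrite !mxE => <-.
  by apply: eq_bigr => r _; rewrite !mxE conjCK.
have Us : forall l, \sum_s P l s * (P j s)^* = (l == j)%:R.
  move=> l; move/unitarymxP: U => /matrixP/(_ l j); rewrite !mxE => <-.
  by apply: eq_bigr => r _; rewrite !mxE.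
under eq_bigr => l _ do rewrite Ur Us.
rewrite (bigD1 j) //= eqxx !mulr1 big1 ?addr0 // => l /negPf nl.
by rewrite eq_sym nl !mulr0.
Qed.

Lemma tensor_psd n m (F : 'I_n -> 'M[C]_m) : (forall i, psd (F i)) ->
  forall h : {ffun 'I_n -> 'I_m} -> C,
  0 <= bil (fun u v : {ffun 'I_n -> 'I_m} => \prod_i F i (u i) (v i)) h h.
Proof.
move=> pF h.
pose sp i j := spectral_diag (F i) 0 j.
pose P i := spectralmx (F i).
have E : forall u v : {ffun 'I_n -> 'I_m}, \prod_i F i (u i) (v i) =
   \sum_(J : {ffun 'I_n -> 'I_m}) (\prod_i (P i (J i) (u i))^*) * (\prod_i sp i (J i))
      * (\prod_i P i (J i) (v i)).
  move=> u v.
  transitivity (\prod_i \sum_j (P i j (u i))^* * sp i j * P i j (v i)).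
    by apply: eq_bigr => i _; case: (psd_spectral (pF i)) => _ ->.
  rewrite bigA_distr_bigA; apply: eq_bigr => J _.
  by rewrite -!big_split.
rewrite /bil.
under eq_bigr => u _ do under eq_bigr => v _ do rewrite E.
rewrite sum3_rearr; apply: sumr_ge0 => J _.
rewrite -mulrA mulr_ge0 //.
  by apply: prodr_ge0 => i _; case: (psd_spectral (pF i)) => ->.
set S' := \sum_s _.
set S := \sum_r _.
have -> : S = S'^*.
  rewrite /S /S' rmorph_sum; apply: eq_bigr => r _.
  rewrite rmorphM /= conjCK rmorph_prod mulrC; congr (_ * _); apply: eq_bigr => i _; exact/esym/conjCK.
by move: (exprn_ge0 2 (normr_ge0 S')); rewrite normCK.
Qed.

End Psd.

Section Classical.
Variable C : numClosedFieldType.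
Variable k : nat.
Variables (nX nA : 'I_k -> nat).
Variable M : bell_functional C nX nA.
Variable w : C.
Hypothesis hub : classical_ub M w.

Lemma cub_fin (J : finType) (lam : J -> C) (P : J -> local_profile C nX nA) :
  (forall j, 0 <= lam j) -> \sum_j lam j = 1 -> (forall j, is_cond_prob (P j)) ->
  `|\sum_x \sum_a M x a * \sum_j lam j * \prod_i P j i (x i) (a i)| <= w.
Proof.
move=> l0 l1 cP.
have H := @hub #|J| (fun j => lam (enum_val j)) (fun j => P (enum_val j)).
rewrite /classical_val in H.
have E : forall F : J -> C, \sum_(j < #|J|) F (enum_val j) = \sum_j F j.
  by move=> F; rewrite -(big_enum_val (A := J)); apply: eq_bigl => j; rewrite inE.
have EE : \sum_x \sum_a M x a * \sum_(j < #|J|) lam (enum_val j) *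
      \prod_i P (enum_val j) i (x i) (a i)
    = \sum_x \sum_a M x a * \sum_j lam j * \prod_i P j i (x i) (a i).
  apply: eq_bigr => x _; apply: eq_bigr => a _; congr (_ * _).
  by rewrite -(big_enum_val (A := J) (fun j => lam j * \prod_i P j i (x i) (a i))); apply: eq_bigl => j; rewrite inE.
rewrite -EE; apply: H => [j||j]; [exact: l0 | by rewrite (E lam) | exact: cP].
Qed.

Lemma classA (P : local_profile C nX nA) (p : 'I_k -> C) :
  (forall i x a, 0 <= P i x a) -> (forall i x, \sum_a P i x a = p i) ->
  (forall i, 0 <= p i) ->
  `|\sum_x \sum_a M x a * \prod_i P i (x i) (a i)| <= (\prod_i p i) * w.
Proof.
move=> P0 Ps p0.
case: (pickP (fun i => p i == 0)) => [i /eqP pi0|nz].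
  have Pz : forall x a, P i x a = 0.
    move=> x a; have := Ps i x; rewrite pi0 => H.
    by apply: (psumr_eq0P (fun a _ => P0 i x a) H).
  rewrite big1; last first.
    move=> x _; rewrite big1 // => a _.
    by rewrite (bigD1 i) //= Pz mul0r mulr0.
  by rewrite (bigD1 i) //= pi0 mul0r mul0r normr0.
have pp : forall i, 0 < p i by move=> i; rewrite lt_def nz p0.
pose P' : local_profile C nX nA := fun i x a => P i x a / p i.
have cP : is_cond_prob P'.
  split => [i x a|i x]; first by rewrite /P' divr_ge0.
  by rewrite /P' -mulr_suml Ps divff // gt_eqF.
have H := @hub _ (fun _ : 'I_1 => 1) (fun _ => P') (fun _ => ler01).
rewrite big_ord1 in H; have {H} := H erefl (fun _ => cP).
rewrite /classical_val.
have -> : \sum_x \sum_a M x a * \sum_(j < 1) 1 * \prod_i P' i (x i) (a i) =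
          \sum_x \sum_a M x a * \prod_i P' i (x i) (a i).
  by apply: eq_bigr => x _; apply: eq_bigr => a _; rewrite big_ord1 mul1r.
have -> : \sum_x \sum_a M x a * \prod_i P i (x i) (a i) =
    (\prod_i p i) * \sum_x \sum_a M x a * \prod_i P' i (x i) (a i).
  rewrite mulr_sumr; apply: eq_bigr => x _; rewrite mulr_sumr; apply: eq_bigr => a _.
  rewrite mulrCA; congr (_ * _); rewrite -big_split /=; apply: eq_bigr => i _.
  by rewrite /P' mulrC mulfVK // gt_eqF.
move=> H; rewrite normrM ger0_norm; last by apply: prodr_ge0 => i _; exact: ltW.
by rewrite ler_pM2l // prodr_gt0.
Qed.

Lemma classB (Q : local_profile C nX nA) (s N : 'I_k -> C) :
  (forall i, 'I_(nX i) -> (0 < nA i)%N) ->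
  (forall i x a, Q i x a \is Num.real) ->
  (forall i x, \sum_a Q i x a = s i) ->
  (forall i x, \sum_a `|Q i x a| <= N i) ->
  (forall i, s i \is Num.real) ->
  (forall i, `|s i| <= N i) ->
  `|\sum_x \sum_a M x a * \prod_i Q i (x i) (a i)| <= (\prod_i N i) * w.
Proof.
move=> hA Qr Qs QN sr sN.
have two0 : (2%:R : C) != 0 by rewrite pnatr_eq0.
pose t i x := (N i - \sum_a `|Q i x a|) / 2%:R.
pose a0 i (x : 'I_(nX i)) : 'I_(nA i) := Ordinal (hA i x).
pose Pp : local_profile C nX nA := fun i x a =>
  (`|Q i x a| + Q i x a) / 2%:R + (a == a0 i x)%:R * t i x.
pose Pm : local_profile C nX nA := fun i x a =>
  (`|Q i x a| - Q i x a) / 2%:R + (a == a0 i x)%:R * t i x.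
pose Pb (b : {ffun 'I_k -> bool}) : local_profile C nX nA :=
  fun i x a => if b i then Pm i x a else Pp i x a.
pose pb (b : {ffun 'I_k -> bool}) i := if b i then (N i - s i) / 2%:R else (N i + s i) / 2%:R.
have t0 : forall i x, 0 <= t i x.
  by move=> i x; rewrite /t divr_ge0 ?ler0n // subr_ge0.
have ind : forall i x, \sum_a (a == a0 i x)%:R * t i x = t i x.
  move=> i x; rewrite (bigD1 (a0 i x)) // eqxx mul1r big1 => [|a /negPf ->].
    by rewrite /= addr0.
  by rewrite mul0r.
have Qp : forall i x a, 0 <= `|Q i x a| + Q i x a.
  move=> i x a; have h : 0 <= `|Q i x a| - - Q i x a.
    by rewrite subr_ge0 -normrN real_ler_norm // rpredN.
  by rewrite opprK in h.
have Qm : forall i x a, 0 <= `|Q i x a| - Q i x a.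
  by move=> i x a; rewrite subr_ge0 real_ler_norm.
have Pp0 : forall i x a, 0 <= Pp i x a.
  move=> i x a; apply: addr_ge0; [apply: divr_ge0 => //; exact: ler0n | apply: mulr_ge0 => //; exact: ler0n].
have Pm0 : forall i x a, 0 <= Pm i x a.
  move=> i x a; apply: addr_ge0; [apply: divr_ge0 => //; exact: ler0n | apply: mulr_ge0 => //; exact: ler0n].
have Pps : forall i x, \sum_a Pp i x a = (N i + s i) / 2%:R.
  move=> i x; rewrite /Pp big_split /= ind -mulr_suml big_split /= Qs /t.
  by field.
have Pms : forall i x, \sum_a Pm i x a = (N i - s i) / 2%:R.
  move=> i x; rewrite /Pm big_split /= ind -mulr_suml sumrB Qs /t.
  by field.
have pb0 : forall b i, 0 <= pb b i.
  move=> b i; rewrite /pb; case: (b i); rewrite divr_ge0 ?ler0n //.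
    by rewrite subr_ge0 (le_trans (real_ler_norm (sr i))).
  rewrite -[s i]opprK subr_ge0 (le_trans _ (sN i)) //.
  by rewrite -normrN real_ler_norm // rpredN.
have decomp : forall (x : qtuple nX) (a : atuple nA),
  \prod_i Q i (x i) (a i) =
  \sum_(b : {ffun 'I_k -> bool}) (\prod_i (if b i then -1 else 1)) *
      \prod_i Pb b i (x i) (a i).
  move=> x a.
  transitivity (\prod_i \sum_(be : bool) (if be then - Pm i (x i) (a i) else Pp i (x i) (a i))).
    apply: eq_bigr => i _; rewrite big_bool /= /Pp /Pm; by field.
  rewrite bigA_distr_bigA; apply: eq_bigr => b _; rewrite -big_split /=.
  by apply: eq_bigr => i _; rewrite /Pb; case: (b i); rewrite ?mulN1r ?mul1r.
have -> : \sum_x \sum_a M x a * \prod_i Q i (x i) (a i) =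
  \sum_(b : {ffun 'I_k -> bool}) (\prod_i (if b i then -1 else 1)) *
     \sum_x \sum_a M x a * \prod_i Pb b i (x i) (a i).
  under eq_bigr => x _ do under eq_bigr => a _ do rewrite decomp mulr_sumr.
  under eq_bigr => x _ do rewrite exchange_big /=.
  rewrite exchange_big /=; apply: eq_bigr => b _.
  rewrite mulr_sumr; apply: eq_bigr => x _; rewrite mulr_sumr; apply: eq_bigr => a _.
  by rewrite mulrCA.
rewrite (le_trans (ler_norm_sum _ _ _)) //.
have -> : (\prod_i N i) * w = \sum_(b : {ffun 'I_k -> bool}) (\prod_i pb b i) * w.
  rewrite -mulr_suml; congr (_ * _).
  transitivity (\prod_i \sum_(be : bool) (if be then (N i - s i) / 2%:R else (N i + s i) / 2%:R)).
    by apply: eq_bigr => i _; rewrite big_bool /=; field.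
  by rewrite bigA_distr_bigA.
apply: ler_sum => b _.
rewrite normrM normr_prod.
have -> : \prod_i `|(if b i then -1 else 1 : C)| = 1.
  by rewrite big1 // => i _; case: (b i); rewrite ?normrN normr1.
rewrite mul1r; apply: classA => // i x.
  by rewrite /Pb; case: (b i).
by rewrite /Pb /pb; case: (b i).
Qed.

End Classical.

Section ReIm.
Variable C : numClosedFieldType.
Definition re (z : C) := (z + z^*) / 2%:R.
Definition im (z : C) := re (- 'i * z).

Lemma two_neq0 : (2%:R : C) != 0. Proof. by rewrite pnatr_eq0. Qed.

Lemma conj2V : ((2%:R : C)^-1)^* = (2%:R)^-1.
Proof. by rewrite rmorphV ?rmorph_nat // unitfE two_neq0. Qed.

Lemma re_real z : re z \is Num.real.
Proof.
apply/CrealP; rewrite /re rmorphM /= conj2V rmorphD /= conjCK addrC //.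
Qed.

Lemma im_real z : im z \is Num.real.
Proof. exact: re_real. Qed.

Lemma reD z1 z2 : re (z1 + z2) = re z1 + re z2.
Proof. by rewrite /re rmorphD /=; field. Qed.

Lemma re_sum (J : finType) (F : J -> C) : re (\sum_j F j) = \sum_j re (F j).
Proof.
rewrite /re rmorph_sum -big_split /= mulr_suml //.
Qed.

Lemma imD z1 z2 : im (z1 + z2) = im z1 + im z2.
Proof. by rewrite /im mulrDr reD. Qed.

Lemma im_sum (J : finType) (F : J -> C) : im (\sum_j F j) = \sum_j im (F j).
Proof. by rewrite /im mulr_sumr re_sum. Qed.

Lemma reZ r z : r \is Num.real -> re (r * z) = r * re z.
Proof. by move=> /CrealP rr; rewrite /re rmorphM /= rr mulrA mulrDr. Qed.

Lemma re_norm z : `|re z| <= `|z|.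
Proof.
rewrite /re normrM normfV normr_nat ler_pdivrMr ?ltr0n //.
rewrite (le_trans (ler_normD _ _)) // norm_conjC.
by rewrite mulr_natr mulr2n.
Qed.

Lemma im_norm z : `|im z| <= `|z|.
Proof.
rewrite /im (le_trans (re_norm _)) // normrM normrN normCi mul1r //.
Qed.

Lemma re_im z : z = re z + 'i * im z.
Proof.
rewrite /im /re rmorphM rmorphN /= conjCi.
have h : 'i * 'i = -1 :> C by rewrite -expr2 sqrCi.
apply/eqP; rewrite -subr_eq0; apply/eqP.
transitivity ((1 + 'i * 'i) * (z - z^*) / 2%:R); first by field.
by rewrite h subrr !mul0r.
Qed.

End ReIm.

Section Cls.
Variable C : numClosedFieldType.
Variables k' m : nat.
Local Notation T := {ffun 'I_k'.+1 -> 'I_m}.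
Local Notation W := {ffun 'I_k' -> 'I_m}.

Definition restr (u : T) : W := [ffun j => u (lift ord0 j)].
Definition cls (w : W) (f : T -> C) : T -> C := fun u => if restr u == w then f u else 0.
Definition K0 (A : 'M[C]_m) : T -> T -> C := fun (u v : T) => A (u ord0) (v ord0).
Definition proj (f : T -> C) : 'I_m -> C := fun r => \sum_(u : T | u ord0 == r) f u.

Lemma sum_cls f u : \sum_w cls w f u = f u.
Proof.
rewrite /cls (bigD1 (restr u)) //= eqxx big1 ?addr0 // => w /negPf.
by rewrite eq_sym => ->.
Qed.

Lemma restr_inj (u v : T) : u ord0 = v ord0 -> restr u = restr v -> u = v.
Proof.
move=> h0 hr; apply/ffunP => i; case: (unliftP ord0 i) => [j ->|->] //.
by have := congr1 (fun g : W => g j) hr; rewrite !ffunE.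
Qed.

Lemma sum_part (F : T -> C) : \sum_u F u = \sum_r \sum_(u : T | u ord0 == r) F u.
Proof. by rewrite (partition_big (fun u : T => u ord0) predT). Qed.

Lemma bil_K0 A f g : bil (K0 A) f g = bil (fun r s => A r s) (proj f) (proj g).
Proof.
rewrite /bil /proj sum_part; apply: eq_bigr => r _.
under [RHS]eq_bigr => s _ do rewrite rmorph_sum !mulr_suml.
rewrite [RHS]exchange_big /=; apply: eq_bigr => u /eqP u0.
rewrite sum_part; apply: eq_bigr => s _; rewrite mulr_sumr; apply: eq_bigr => v /eqP v0.
by rewrite /K0 u0 v0.
Qed.

Lemma K0_psd A : psd A -> forall h, 0 <= bil (K0 A) h h.
Proof. by move=> pA h; rewrite bil_K0; apply: psd_bil. Qed.

Lemma K0_herm A : psd A -> herm (K0 A).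
Proof. by move=> pA u v; rewrite /K0; case: pA => h _; rewrite h. Qed.

Lemma K0_sum (J : finType) (A : J -> 'M[C]_m) f g :
  \sum_j bil (K0 (A j)) f g = bil (K0 (\sum_j A j)) f g.
Proof.
have := bil_lin (fun _ => 1) (fun j => K0 (A j)) f g.
under eq_bigr => j _ do rewrite mul1r.
move=> ->; apply: eq_bigr => u _; apply: eq_bigr => v _.
by rewrite /K0 summxE; congr (_ * _ * _); apply: eq_bigr => j _; rewrite mul1r.
Qed.

Lemma cls_block (F : 'I_k'.+1 -> 'M[C]_m) w1 w2 f g :
  bil (fun u v : T => \prod_i F i (u i) (v i)) (cls w1 f) (cls w2 g) =
  (\prod_j F (lift ord0 j) (w1 j) (w2 j)) * bil (K0 (F ord0)) (cls w1 f) (cls w2 g).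
Proof.
rewrite /bil mulr_sumr; apply: eq_bigr => u _; rewrite mulr_sumr; apply: eq_bigr => v _.
rewrite /cls; case: eqP => hu; last by rewrite rmorph0 !mul0r mulr0.
case: eqP => hv; last by rewrite !mulr0.
rewrite big_ord_recl /K0.
have -> : \prod_(i < k') F (lift ord0 i) (u (lift ord0 i)) (v (lift ord0 i)) =
          \prod_j F (lift ord0 j) (w1 j) (w2 j).
  apply: eq_bigr => j _; rewrite -hu -hv /restr !ffunE //.
by rewrite /=; ring.
Qed.

Lemma K0_one_cls w f : bil (K0 1%:M) (cls w f) (cls w f) = \sum_u `|cls w f u| ^+ 2.
Proof.
rewrite /bil; apply: eq_bigr => u _.
rewrite (bigD1 u) //= /K0 mxE eqxx mulr1 normCKC big1 ?addr0 // => v nvu.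
rewrite mxE /cls.
have [hu|hu] := eqVneq (restr u) w; last by rewrite rmorph0 !mul0r.
have [hv|hv] := eqVneq (restr v) w; last by rewrite mulr0.
have [h0|h0] := eqVneq (u ord0) (v ord0); last by rewrite mulr0 mul0r.
by move: nvu; rewrite (restr_inj (esym h0)) ?eqxx // hu hv.
Qed.

Lemma sum_K0_one f : \sum_w bil (K0 1%:M) (cls w f) (cls w f) = \sum_u `|f u| ^+ 2.
Proof.
under eq_bigr => w _ do rewrite K0_one_cls.
rewrite exchange_big /=; apply: eq_bigr => u _.
rewrite (bigD1 (restr u)) //= big1 ?addr0 /cls ?eqxx // => w.
by rewrite eq_sym => /negPf ->; rewrite normr0 expr0n.
Qed.

End Cls.

Lemma psd_diag (C : numClosedFieldType) m (A : 'M[C]_m) r : psd A -> 0 <= A r r.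
Proof. by move=> pA; have := psd_bil pA (fun t => (t == r)%:R); rewrite bil_delta. Qed.

Lemma povm_diag (C : numClosedFieldType) k (nX nA : 'I_k -> nat) m
   (E : forall i : 'I_k, 'I_(nX i) -> 'I_(nA i) -> 'M[C]_m) i x r s :
  is_povm E -> \sum_a E i x a r s = (r == s)%:R.
Proof. by move=> hE; rewrite -summxE (hE i x).2 mxE. Qed.

Lemma game_bound (C : numClosedFieldType) k' (nX nA : 'I_k'.+1 -> nat)
  (G : bell_functional C nX nA) (om : C) m (psi : {ffun 'I_k'.+1 -> 'I_m} -> C)
  (E : forall i : 'I_k'.+1, 'I_(nX i) -> 'I_(nA i) -> 'M[C]_m) :
  (forall x a, 0 <= G x a) -> classical_ub G om -> is_unit_state psi -> is_povm E ->
  (0 < m)%N ->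
  `|quantum_val G psi E| <= (m ^ k')%:R * om /\ 0 <= om.
Proof.
move=> G0 hub hpsi hE hm.
pose Kxa (x : qtuple nX) (a : atuple nA) := fun u v : {ffun 'I_k'.+1 -> 'I_m} =>
   \prod_i E i (x i) (a i) (u i) (v i).
pose Kg := fun u v => \sum_x \sum_a G x a * Kxa x a u v.
have Hqv : quantum_val G psi E = bil Kg psi psi.
  by rewrite /quantum_val -bil_lin2.
have Kg0 : forall h, 0 <= bil Kg h h.
  move=> h; rewrite -bil_lin2; apply: sumr_ge0 => x _; apply: sumr_ge0 => a _.
  rewrite mulr_ge0 //; apply: (tensor_psd (F := fun i => E i (x i) (a i))) => i.
  exact: (hE i (x i)).1.
pose o : 'I_m := Ordinal hm.
pose nw w := bil (K0 1%:M) (cls w psi) (cls w psi).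
pose R w (A : 'M[C]_m) := bil (K0 A) (cls w psi) (cls w psi).
have R0 : forall w i x a, 0 <= R w (E i x a).
  by move=> w i x a; apply: K0_psd; exact: (hE i x).1.
have sumR : forall w i x, \sum_a R w (E i x a) = nw w.
  by move=> w i x; rewrite /R K0_sum (hE i x).2.
have nw0 : forall w, 0 <= nw w.
  by move=> w; rewrite /nw K0_one_cls; apply: sumr_ge0 => u _; apply: exprn_ge0.
have nw1 : \sum_w nw w = 1 by rewrite /nw sum_K0_one.
have Rz : forall w i x a, nw w = 0 -> R w (E i x a) = 0.
  move=> w i x a h; have := sumR w i x; rewrite h => H.
  exact: (psumr_eq0P (fun a _ => R0 w i x a) H).
pose P (w : {ffun 'I_k' -> 'I_m}) : local_profile C nX nA := fun i x a =>
  match unlift ord0 i with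
  | Some j => E i x a (w j) (w j)
  | None => if nw w == 0 then E i x a o o else R w (E i x a) / nw w
  end.
have cP : forall w, is_cond_prob (P w).
  move=> w; split=> i; case: (unliftP ord0 i) => [j ->|->] x.
  - by move=> a; rewrite /P liftK; apply: psd_diag; exact: (hE _ x).1.
  - move=> a; rewrite /P unlift_none; case: eqP => _.
      by apply: psd_diag; exact: (hE _ x).1.
    by apply: divr_ge0.
  - by rewrite /P liftK povm_diag // eqxx.
  - rewrite /P unlift_none; case: eqP => h; first by rewrite povm_diag // eqxx.
    by rewrite -mulr_suml sumR divff //; apply/eqP.
have Hw : forall w, bil Kg (cls w psi) (cls w psi) =
   \sum_(x : qtuple nX) \sum_(a : atuple nA) G x a * (nw w * \prod_i P w i (x i) (a i)).
  move=> w; rewrite /Kg -(bil_lin2 G Kxa); apply eq_bigr => x _; apply eq_bigr => a _.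
  congr (_ * _); rewrite cls_block big_ord_recl [RHS]mulrA [RHS]mulrC; congr (_ * _).
    by apply: eq_bigr => j _; rewrite /P liftK.
  rewrite /P unlift_none; case: eqP => h.
    by rewrite h mul0r; rewrite -/(R w _) Rz.
  by rewrite mulrC mulfVK //; apply/eqP.
set S := \sum_w bil Kg (cls w psi) (cls w psi).
have S0 : 0 <= S by apply: sumr_ge0 => w _; apply: Kg0.
have Sb : `|S| <= om.
  have := cub_fin hub (fun w => nw0 w) nw1 cP.
  congr (`|_| <= _); rewrite /S.
  under [RHS]eq_bigr => w _ do rewrite Hw.
  rewrite [RHS]exchange_big; apply: eq_bigr => x _ /=.
  rewrite [RHS]exchange_big; apply: eq_bigr => a _ /=.
  by rewrite mulr_sumr.
have om0 : 0 <= om by apply: le_trans Sb.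
split => //.
have qv0 : 0 <= quantum_val G psi E by rewrite Hqv.
rewrite ger0_norm // Hqv.
have -> : bil Kg psi psi = bil Kg (fun u => \sum_w cls w psi u) (fun u => \sum_w cls w psi u).
  by apply: eq_bil => u; rewrite sum_cls.
apply: (le_trans (bil_cs _ _)) => //.
rewrite card_ffun !card_ord natrX -/S.
rewrite ler_wpM2l ?exprn_ge0 ?ler0n //.
by rewrite -(ger0_norm S0).
Qed.


Lemma psd1 (C : numClosedFieldType) m : psd (1%:M : 'M[C]_m).
Proof.
split=> [r s|v]; first by rewrite !mxE eq_sym rmorph_nat.
rewrite /bil; apply: sumr_ge0 => r _.
rewrite (bigD1 r) //= big1 => [|s /negPf nrs]; last by rewrite mxE eq_sym nrs mulr0 mul0r.
by rewrite mxE eqxx mulr1 /= addr0 -normCKC exprn_ge0.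
Qed.

Lemma entry_amgm (C : numClosedFieldType) m (A : 'M[C]_m) r s : psd A ->
  `|A r s| <= (A r r + A s s) / 2%:R.
Proof.
move=> pA; have := bil_amgm (fun t => (t == r)%:R) (fun t => (t == s)%:R)
  (psd_herm pA) (psd_bil pA).
by rewrite !bil_delta.
Qed.

Lemma povm_hA (C : numClosedFieldType) k (nX nA : 'I_k -> nat) m
   (E : forall i : 'I_k, 'I_(nX i) -> 'I_(nA i) -> 'M[C]_m) :
  is_povm E -> (0 < m)%N -> forall i, 'I_(nX i) -> (0 < nA i)%N.
Proof.
move=> hE hm i x; rewrite lt0n; apply/negP => /eqP h0.
have := @povm_diag _ _ _ _ _ E i x (Ordinal hm) (Ordinal hm) hE; rewrite eqxx big1 => [/eqP|a].
  by rewrite eq_sym oner_eq0.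
by have := ltn_ord a; rewrite {2}h0.
Qed.

Lemma om_ge0 (C : numClosedFieldType) k (nX nA : 'I_k -> nat)
  (M : bell_functional C nX nA) om :
  classical_ub M om -> (forall i, 'I_(nX i) -> (0 < nA i)%N) -> 0 <= om.
Proof.
move=> hub hA.
pose P : local_profile C nX nA := fun i x a => (a == Ordinal (hA i x))%:R.
have cP : is_cond_prob P.
  split=> [i x a|i x]; first by rewrite /P ler0n.
  rewrite /P (bigD1 (Ordinal (hA i x))) // eqxx big1 => [|a /negPf -> //].
  by rewrite /= addr0.
have := @hub 1 (fun _ => 1) (fun _ => P) (fun _ => ler01).
rewrite big_ord1 => /(_ erefl (fun _ => cP)).
exact: le_trans.
Qed.

Lemma re_expand (C : numClosedFieldType) k' (Z : 'I_k' -> C) (R : C) :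
  re ((\prod_j Z j) * R) = \sum_(b : {ffun 'I_k' -> bool})
     re ((\prod_j (if b j then 'i else 1)) * R) *
     \prod_j (if b j then im (Z j) else re (Z j)).
Proof.
have -> : \prod_j Z j = \prod_j \sum_(be : bool) (if be then 'i * im (Z j) else re (Z j)).
  by apply: eq_bigr => j _; rewrite big_bool /= addrC -re_im.
rewrite bigA_distr_bigA mulr_suml re_sum; apply: eq_bigr => b _.
have -> : \prod_j (if b j then 'i * im (Z j) else re (Z j)) =
   (\prod_j (if b j then 'i else 1)) * \prod_j (if b j then im (Z j) else re (Z j)).
  by rewrite -big_split /=; apply: eq_bigr => j _; case: (b j); rewrite ?mul1r.
have Yr : \prod_j (if b j then im (Z j) else re (Z j)) \is Num.real.
  by apply: rpred_prod => j _; case: (b j); [exact: im_real | exact: re_real].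
by rewrite mulrAC [X in re X = _]mulrC reZ // mulrC.
Qed.

Lemma norm_cb (C : numClosedFieldType) k' (b : {ffun 'I_k' -> bool}) :
  `|\prod_j (if b j then 'i else 1 : C)| = 1.
Proof.
by rewrite normr_prod big1 // => j _; case: (b j); rewrite ?normCi ?normr1.
Qed.

Lemma bell_bound (C : numClosedFieldType) k' (nX nA : 'I_k'.+1 -> nat)
  (M : bell_functional C nX nA) (om : C) m (psi : {ffun 'I_k'.+1 -> 'I_m} -> C)
  (E : forall i : 'I_k'.+1, 'I_(nX i) -> 'I_(nA i) -> 'M[C]_m) :
  (forall x a, M x a \is Num.real) -> classical_ub M om -> is_unit_state psi ->
  is_povm E -> (0 < m)%N ->
  `|quantum_val M psi E| <= (2 ^ k')%:R * ((m ^ k')%:R * om) /\ 0 <= om.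
Proof.
move=> Mr hub hpsi hE hm.
have hA := povm_hA hE hm.
have om0 := om_ge0 hub hA.
split => //.
pose Kxa (x : qtuple nX) (a : atuple nA) := fun u v : {ffun 'I_k'.+1 -> 'I_m} =>
   \prod_i E i (x i) (a i) (u i) (v i).
pose KM := fun u v => \sum_x \sum_a M x a * Kxa x a u v.
have Hqv : quantum_val M psi E = bil KM psi psi.
  by rewrite /quantum_val -bil_lin2.
have hK : herm KM.
  move=> u v; rewrite /KM rmorph_sum; apply: eq_bigr => x _.
  rewrite rmorph_sum; apply: eq_bigr => a _.
  rewrite rmorphM /= conj_Creal //; congr (_ * _).
  rewrite /Kxa rmorph_prod; apply: eq_bigr => i _.
  by case: ((hE i (x i)).1 (a i)) => h _; rewrite h.
set V := quantum_val M psi E.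
have Vr : V = re V.
  by rewrite /re /V Hqv bil_conj //; field.
pose nw w := bil (K0 1%:M) (cls w psi) (cls w psi).
have nw0 : forall w, 0 <= nw w.
  by move=> w; rewrite /nw K0_one_cls; apply: sumr_ge0 => u _; apply: exprn_ge0.
have nw1 : \sum_w nw w = 1 by rewrite /nw sum_K0_one.
pose T w1 w2 := bil KM (cls w1 psi) (cls w2 psi).
have VT : V = \sum_w1 \sum_w2 T w1 w2.
  rewrite /V Hqv (@eq_bil _ _ _ psi (fun u => \sum_w cls w psi u) psi
     (fun u => \sum_w cls w psi u)) => [|u|u]; try by rewrite sum_cls.
  by rewrite bil_suml; apply: eq_bigr => w1 _; rewrite bil_sumr.
have TB : forall w1 w2, `|re (T w1 w2)| <= (2 ^ k')%:R * ((nw w1 + nw w2) / 2%:R * om).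
  move=> w1 w2.
  pose R12 (A : 'M[C]_m) := bil (K0 A) (cls w1 psi) (cls w2 psi).
  pose cb (b : {ffun 'I_k' -> bool}) := \prod_j (if b j then 'i else 1 : C).
  pose Q (b : {ffun 'I_k' -> bool}) : local_profile C nX nA := fun i x a =>
    match unlift ord0 i with
    | Some j => (if b j then @im C else @re C) (E i x a (w1 j) (w2 j))
    | None => re (cb b * R12 (E i x a))
    end.
  pose s (b : {ffun 'I_k' -> bool}) (i : 'I_k'.+1) := match unlift ord0 i with
    | Some j => (if b j then @im C else @re C) ((w1 j == w2 j)%:R)
    | None => re (cb b * R12 1%:M) end.
  pose N (i : 'I_k'.+1) := match unlift ord0 i with
    | Some _ => 1 | None => (nw w1 + nw w2) / 2%:R end.
  have HT : re (T w1 w2) = \sum_(b : {ffun 'I_k' -> bool})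
      \sum_(x : qtuple nX) \sum_(a : atuple nA) M x a * \prod_i Q b i (x i) (a i).
    rewrite /T /KM -(bil_lin2 M Kxa) re_sum.
    transitivity (\sum_(x : qtuple nX) \sum_(a : atuple nA) M x a *
       \sum_(b : {ffun 'I_k' -> bool}) \prod_i Q b i (x i) (a i)).
      apply: eq_bigr => x _; rewrite re_sum; apply: eq_bigr => a _.
      rewrite reZ //; congr (_ * _).
      rewrite (cls_block (fun i => E i (x i) (a i))) re_expand.
      apply: eq_bigr => b _; rewrite big_ord_recl /Q unlift_none.
      congr (_ * _); under [RHS]eq_bigr => j _ do rewrite liftK.
      by apply: eq_bigr => j _; case: (b j).
    under eq_bigr => x _ do under eq_bigr => a _ do rewrite mulr_sumr.
    under eq_bigr => x _ do rewrite exchange_big /=.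
    by rewrite exchange_big.
  have cb1 : forall b, `|cb b| = 1 by move=> b; exact: norm_cb.
  have pK1 := psd1 C m.
  have hsum2 : forall (J : finType) (X Y : J -> C),
      \sum_j (X j + Y j) / 2%:R = (\sum_j X j + \sum_j Y j) / 2%:R.
    by move=> J X Y; rewrite -mulr_suml big_split.
  rewrite HT (le_trans (ler_norm_sum _ _ _)) //.
  have PN : \prod_i N i = (nw w1 + nw w2) / 2%:R.
    by rewrite big_ord_recl /N unlift_none big1 ?mulr1 // => j _; rewrite liftK.
  have -> : (2 ^ k')%:R * ((nw w1 + nw w2) / 2%:R * om) =
      \sum_(b : {ffun 'I_k' -> bool}) (\prod_i N i) * om.
    by rewrite sumr_const card_ffun card_bool card_ord PN mulr_natl.
  apply: ler_sum => b _; apply: (classB hub (s := s b)) => //.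
  - move=> i; case: (unliftP ord0 i) => [j ->|->] x a; rewrite /Q ?liftK ?unlift_none.
      by case: (b j); [exact: im_real | exact: re_real].
    exact: re_real.
  - move=> i; case: (unliftP ord0 i) => [j ->|->] x; rewrite /Q /s ?liftK ?unlift_none.
      by case: (b j) => /=; rewrite -?im_sum -?re_sum povm_diag.
    by rewrite -re_sum -mulr_sumr /R12 K0_sum (hE _ x).2.
  - move=> i; case: (unliftP ord0 i) => [j ->|->] x; rewrite /Q /N ?liftK ?unlift_none.
      apply: (@le_trans _ _ (\sum_a `|E (lift ord0 j) x a (w1 j) (w2 j)|)).
        by apply: ler_sum => a _; case: (b j); [exact: im_norm | exact: re_norm].
      apply: (@le_trans _ _ (\sum_a (E (lift ord0 j) x a (w1 j) (w1 j)
                  + E (lift ord0 j) x a (w2 j) (w2 j)) / 2%:R)).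
        by apply: ler_sum => a _; apply: entry_amgm; exact: (hE _ x).1.
      rewrite hsum2 !povm_diag // !eqxx.
      by rewrite -(natrD _ 1 1) divff // pnatr_eq0.
    apply: (@le_trans _ _ (\sum_a `|R12 (E ord0 x a)|)).
      apply: ler_sum => a _; apply: le_trans (re_norm _) _.
      by rewrite normrM cb1 mul1r.
    apply: (@le_trans _ _ (\sum_a (bil (K0 (E ord0 x a)) (cls w1 psi) (cls w1 psi)
              + bil (K0 (E ord0 x a)) (cls w2 psi) (cls w2 psi)) / 2%:R)).
      apply: ler_sum => a _; have pE := (hE ord0 x).1 a.
      exact: (bil_amgm _ _ (K0_herm pE) (K0_psd pE)).
    by rewrite hsum2 !K0_sum (hE ord0 x).2.
  - move=> i; case: (unliftP ord0 i) => [j ->|->]; rewrite /s ?liftK ?unlift_none.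
      by case: (b j); [exact: im_real | exact: re_real].
    exact: re_real.
  - move=> i; case: (unliftP ord0 i) => [j ->|->]; rewrite /s /N ?liftK ?unlift_none.
      apply: (@le_trans _ _ `|((w1 j == w2 j)%:R : C)|).
        by case: (b j); [exact: im_norm | exact: re_norm].
      by case: eqP; rewrite ?normr1 ?normr0 ?ler01.
    apply: le_trans (re_norm _) _; rewrite normrM cb1 mul1r.
    exact: (bil_amgm _ _ (K0_herm pK1) (K0_psd pK1)).
rewrite Vr VT re_sum.
apply: le_trans (ler_norm_sum _ _ _) _.
apply: (@le_trans _ _ (\sum_w1 \sum_w2 (2 ^ k')%:R * ((nw w1 + nw w2) / 2%:R * om))).
  apply: ler_sum => w1 _; rewrite re_sum; apply: le_trans (ler_norm_sum _ _ _) _.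
  by apply: ler_sum => w2 _; apply: TB.
have S2 : \sum_(w1 : {ffun 'I_k' -> 'I_m}) \sum_(w2 : {ffun 'I_k' -> 'I_m}) (nw w1 + nw w2)
     = 2%:R * (m ^ k')%:R.
  under eq_bigr => w1 _ do rewrite big_split /= sumr_const nw1.
  rewrite big_split /= sumr_const sumrMnl nw1 card_ffun !card_ord.
  by rewrite mulr_natl mulr2n.
have -> : \sum_(w1 : {ffun 'I_k' -> 'I_m}) \sum_(w2 : {ffun 'I_k' -> 'I_m})
    (2 ^ k')%:R * ((nw w1 + nw w2) / 2%:R * om) =
    ((2 ^ k')%:R * om / 2%:R) * \sum_(w1 : {ffun 'I_k' -> 'I_m})
       \sum_(w2 : {ffun 'I_k' -> 'I_m}) (nw w1 + nw w2).
  rewrite mulr_sumr; apply: eq_bigr => w1 _; rewrite mulr_sumr; apply: eq_bigr => w2 _.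
  by field.
rewrite S2.
have -> : (2 ^ k')%:R * om / 2%:R * (2%:R * (m ^ k')%:R) =
          (2 ^ k')%:R * ((m ^ k')%:R * om) :> C by field.
exact: lexx.
Qed.



Lemma unit_m_pos (C : numClosedFieldType) k' m (psi : {ffun 'I_k'.+1 -> 'I_m} -> C) :
  is_unit_state psi -> (0 < m)%N.
Proof.
move=> hpsi; rewrite lt0n; apply/negP => /eqP m0.
move: hpsi; rewrite /is_unit_state big1 => [/eqP|u]; first by rewrite eq_sym oner_eq0.
by case: (u ord0) => t ht; rewrite m0 in ht.
Qed.

Theorem mainTheorem8 (C : numClosedFieldType) (k : nat) (hk : (2 <= k)%N)
    (d : nat) (hd : (1 <= d)%N) :
  (forall (nX nA : 'I_k -> nat) (G : bell_functional C nX nA),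
     (forall x a, 0 <= G x a) ->
     forall w : C, classical_ub G w ->
     quantum_bounded G d ((d%:R : C) ^+ (k - 1) * w))
  /\
  (forall (nX nA : 'I_k -> nat) (M : bell_functional C nX nA),
     (forall x a, M x a \is Num.real) ->
     forall w : C, classical_ub M w ->
     quantum_bounded M d (((2 * d)%N%:R : C) ^+ (k - 1) * w)).
Proof.
case: k hk => [//|k'] hk.
have k0 : (0 < k')%N by [].
have -> : (k'.+1 - 1 = k')%N by rewrite subn1.
split.
- move=> nX nA G G0 om hub m psi E hmd hpsi hE.
  have hm := unit_m_pos hpsi.
  have [H om0] := game_bound G0 hub hpsi hE hm.
  apply: le_trans H _; rewrite ler_wpM2r // -natrX ler_nat leq_exp2r //.
- move=> nX nA M Mr om hub m psi E hmd hpsi hE.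
  have hm := unit_m_pos hpsi.
  have [H om0] := bell_bound Mr hub hpsi hE hm.
  apply: le_trans H _; rewrite mulrA -natrM -expnMn ler_wpM2r // -natrX ler_nat.
  by rewrite leq_exp2r // leq_mul2l.
Qed.
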